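(* Let $\mathcal{X},\mathcal{Y}$ be finite Markov chains and $C:{\bm X}\times{\bm Y}\to\mathbb{R}_+$ a cost function. Then for every $k\in\mathbb{N}$, $d^{(k)}_{\mathrm{WL}}(\mathcal{X},\mathcal{Y};C)=\lim_{\delta\to0}d^{\delta,(k)}_{\mathrm{WL}}(\mathcal{X},\mathcal{Y};C)$. Consequently, when $\mathcal{X},\mathcal{Y}$ are stationary, $d^{(\infty)}_{\mathrm{WL}}(\mathcal{X},\mathcal{Y};C)=\lim_{k\to\infty}\lim_{\delta\to0}d^{\delta,(k)}_{\mathrm{WL}}(\mathcal{X},\mathcal{Y};C)$.
   Context: A finite Markov chain $\mathcal{X}=({\bm X},m^{\bm X}_\bullet,\nu^{\bm X})$ consists of a finite set ${\bm X}$, a transition kernel $m^{\bm X}_\bullet:{\bm X}\to\mathcal{P}({\bm X})$ and an initial distribution $\nu^{\bm X}$; it is stationary if $\nu^{\bm X}$ is stationary for $m^{\bm X}_\bullet$. $\mathcal{C}(\alpha,\beta)$ denotes the set of couplings. A Markovian coupling between $\mathcal{X}$ and $\mathcal{Y}$ is a (possibly time-inhomogeneous) Markov chain $(X_t,Y_t)_{t\in\mathbb{N}}$ on ${\bm X}\times{\bm Y}$ with $\mathrm{law}(X_0,Y_0)\in\mathcal{C}(\nu^{\bm X},\nu^{\bm Y})$ and, for all $t,x,y$, the conditional law of $(X_{t+1},Y_{t+1})$ given $(X_t,Y_t)=(x,y)$ in $\mathcal{C}(m^{\bm X}_x,m^{\bm Y}_y)$; $\Pi(\mathcal{X},\mathcal{Y})$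 is the set of Markovian couplings. $d^{(k)}_{\mathrm{WL}}(\mathcal{X},\mathcal{Y};C)=\inf_{\Pi(\mathcal{X},\mathcal{Y})}\mathbb{E}\,C(X_k,Y_k)$ and, for stationary chains, $d^{(\infty)}_{\mathrm{WL}}=\sup_{k\in\mathbb{N}}d^{(k)}_{\mathrm{WL}}$. For $\delta\in[0,1]$ and $k\in\mathbb{N}$, $d^{\delta,(k)}_{\mathrm{WL}}(\mathcal{X},\mathcal{Y};C)=\inf_{\Pi(\mathcal{X},\mathcal{Y})}\mathbb{E}\big[\sum_{t=0}^{k-1}\delta(1-\delta)^tC(X_t,Y_t)+(1-\delta)^kC(X_k,Y_k)\big]$. *)

(* Defs.v *)
From HB Require Import structures.
From mathcomp Require Import all_boot all_order all_algebra.
From mathcomp Require Import all_classical all_reals all_analysis.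

Set Implicit Arguments.
Unset Strict Implicit.
Unset Printing Implicit Defensive.

Import Order.TTheory GRing.Theory Num.Theory.
Import numFieldNormedType.Exports.
Local Open Scope classical_set_scope.
Local Open Scope ring_scope.

Section WL.
Variable R : realType.

Definition is_distr (T : finType) (p : T -> R) : Prop :=
  (forall t, 0 <= p t) /\ \sum_(t : T) p t = 1.

Definition is_kernel (T : finType) (m : T -> T -> R) : Prop :=
  forall x, is_distr (m x).

Definition is_stationary (T : finType) (m : T -> T -> R) (nu : T -> R) : Prop :=
  forall y, nu y = \sum_(x : T) nu x * m x y.

Definition is_coupling (X Y : finType) (a : X -> R) (b : Y -> R)
    (g : X * Y -> R) : Prop :=
  (forall z, 0 <= g z) /\
  (forall x, \sum_(y : Y) g (x, y) = a x) /\
  (forall y, \sum_(x : X) g (x, y) = b y).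

(* A (possibly time-inhomogeneous) Markov chain on X * Y is given by its
   initial law mu0 and its transition kernels K t : X*Y -> P(X*Y). *)
Definition markov_coupling (X Y : finType)
    (mX : X -> X -> R) (nuX : X -> R) (mY : Y -> Y -> R) (nuY : Y -> R)
    (mu0 : X * Y -> R) (K : nat -> X * Y -> X * Y -> R) : Prop :=
  is_coupling nuX nuY mu0 /\
  forall t x y, is_coupling (mX x) (mY y) (K t (x, y)).

Fixpoint chain_law (Z : finType) (mu0 : Z -> R) (K : nat -> Z -> Z -> R)
    (t : nat) : Z -> R :=
  match t with
  | 0 => mu0
  | t'.+1 => fun z' => \sum_(z : Z) chain_law mu0 K t' z * K t' z z'
  end.

Definition exp_cost (X Y : finType) (C : X -> Y -> R) (mu0 : X * Y -> R)
    (K : nat -> X * Y -> X * Y -> R) (t : nat) : R :=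
  \sum_(z : X * Y) chain_law mu0 K t z * C z.1 z.2.

Definition dWL (X Y : finType)
    (mX : X -> X -> R) (nuX : X -> R) (mY : Y -> Y -> R) (nuY : Y -> R)
    (C : X -> Y -> R) (k : nat) : R :=
  inf [set e : R | exists mu0 K,
         markov_coupling mX nuX mY nuY mu0 K /\ e = exp_cost C mu0 K k].

Definition dWL_delta (X Y : finType)
    (mX : X -> X -> R) (nuX : X -> R) (mY : Y -> Y -> R) (nuY : Y -> R)
    (C : X -> Y -> R) (delta : R) (k : nat) : R :=
  inf [set e : R | exists mu0 K,
         markov_coupling mX nuX mY nuY mu0 K /\
         e = \sum_(t < k) delta * (1 - delta) ^+ t * exp_cost C mu0 K t
             + (1 - delta) ^+ k * exp_cost C mu0 K k].

(* d^{(infty)}_WL = sup_k d^{(k)}_WL (for stationary chains) *)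
Definition dWL_inf (X Y : finType)
    (mX : X -> X -> R) (nuX : X -> R) (mY : Y -> Y -> R) (nuY : Y -> R)
    (C : X -> Y -> R) : R :=
  sup [set dWL mX nuX mY nuY C k | k in [set: nat]].

End WL.

(* Main.v *)
Require Import Defs.
From HB Require Import structures.
From mathcomp Require Import all_boot all_order all_algebra.
From mathcomp Require Import all_classical all_reals all_analysis.
From mathcomp Require Import lra.
Import Order.TTheory GRing.Theory Num.Theory.
Import numFieldNormedType.Exports.
Local Open Scope classical_set_scope.
Local Open Scope ring_scope.

Section Helpers.
Variable R : realType.
Variables X Y : finType.

Lemma sumXY (f : X * Y -> R) :
  \sum_(z : X * Y) f z = \sum_(x : X) \sum_(y : Y) f (x, y).
Proof. by rewrite pair_big; apply: eq_bigr => -[]. Qed.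

Variables (mX : X -> X -> R) (nuX : X -> R) (mY : Y -> Y -> R) (nuY : Y -> R).
Hypotheses (hmX : is_kernel mX) (hnuX : is_distr nuX)
    (hmY : is_kernel mY) (hnuY : is_distr nuY).

Lemma law_distr mu0 K : markov_coupling mX nuX mY nuY mu0 K ->
  forall t, (forall z, 0 <= chain_law mu0 K t z) /\
            \sum_z chain_law mu0 K t z = 1.
Proof.
move=> [[h0 [h1 h2]] hK]; elim=> [|t [IH1 IH2]] /=.
  split=> // ; rewrite sumXY; under eq_bigr do rewrite h1.
  by case: hnuX.
split.
  by move=> z'; apply: sumr_ge0 => z _; apply: mulr_ge0 => //; case: z => x y;
    case: (hK t x y).
rewrite exchange_big /=.
rewrite -[RHS]IH2; apply: eq_bigr => -[x y] _.
rewrite -mulr_sumr sumXY.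
have [_ [hx _]] := hK t x y.
under eq_bigr do rewrite hx.
by case: (hmX x) => _ ->; rewrite mulr1.
Qed.

Variable C : X -> Y -> R.
Hypothesis hC : forall x y, 0 <= C x y.
Let M := \sum_(z : X * Y) C z.1 z.2.

Lemma M_ge0 : 0 <= M.
Proof. by apply: sumr_ge0 => z _. Qed.

Lemma C_leM z : C z.1 z.2 <= M.
Proof.
rewrite /M (bigD1 z) //= lerDl; apply: sumr_ge0 => *; exact: hC.
Qed.

Lemma cost_bound mu0 K t : markov_coupling mX nuX mY nuY mu0 K ->
  0 <= exp_cost C mu0 K t <= M.
Proof.
move=> /law_distr /(_ t) [h1 h2]; apply/andP; split.
  by apply: sumr_ge0 => z _; apply: mulr_ge0.
rewrite /exp_cost -[leRHS]mul1r -h2 mulr_suml; apply: ler_sum => z _.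
by apply: ler_wpM2l => //; apply: C_leM.
Qed.

Definition prodK (t : nat) (z z' : X * Y) : R := mX z.1 z'.1 * mY z.2 z'.2.
Definition prod0 (z : X * Y) : R := nuX z.1 * nuY z.2.

Lemma prod_coupling : markov_coupling mX nuX mY nuY prod0 prodK.
Proof.
split.
  split; [|split].
  - by move=> [x y]; apply: mulr_ge0; [case: hnuX|case: hnuY].
  - by move=> x; rewrite /prod0 /= -mulr_sumr; case: hnuY => _ ->; rewrite mulr1.
  - by move=> y; rewrite /prod0 /= -mulr_suml; case: hnuX => _ ->; rewrite mul1r.
move=> t x y; split; [|split].
- by move=> [x' y']; apply: mulr_ge0; [case: (hmX x)|case: (hmY y)].
- by move=> x'; rewrite /prodK /= -mulr_sumr; case: (hmY y) => _ ->; rewrite mulr1.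
- by move=> y'; rewrite /prodK /= -mulr_suml; case: (hmX x) => _ ->; rewrite mul1r.
Qed.

Definition MC := [set p : (X * Y -> R) * (nat -> X * Y -> X * Y -> R) |
  markov_coupling mX nuX mY nuY p.1 p.2].

Lemma inf_close (f g : (X * Y -> R) * (nat -> X * Y -> X * Y -> R) -> R) (eps : R) :
  (forall p, MC p -> 0 <= f p) -> (forall p, MC p -> 0 <= g p) ->
  (forall p, MC p -> `|f p - g p| <= eps) ->
  `|inf [set e : R | exists p, MC p /\ e = f p] -
    inf [set e : R | exists p, MC p /\ e = g p]| <= eps.
Proof.
move=> f0 g0 fg.
have ne : forall h : _ -> R, [set e : R | exists p, MC p /\ e = h p] !=set0.
  by move=> h; exists (h (prod0, prodK)), (prod0, prodK); split=> //;
    exact: prod_coupling.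
have lb : forall h : _ -> R, (forall p, MC p -> 0 <= h p) ->
    has_lbound [set e : R | exists p, MC p /\ e = h p].
  move=> h h0; exists 0; move=> _ [p [Mp ->]]. exact: (h0 p Mp).
have key : forall f g : _ -> R, (forall p, MC p -> 0 <= g p) ->
    (forall p, MC p -> `|f p - g p| <= eps) ->
    inf [set e : R | exists p, MC p /\ e = g p] - eps <=
    inf [set e : R | exists p, MC p /\ e = f p].
  move=> f1 g1 g10 fg1; apply: lb_le_inf; first exact: ne.
  move=> _ [p [Mp ->]].
  have := ge_inf (lb _ g10) (ex_intro _ p (conj Mp erefl)).
  have := fg1 p Mp; rewrite ler_norml => /andP[h1 h2] h3.
  move: h1 h2 h3; set a := inf _; move=> h1 h2 h3; lra.
have k1 := key f g g0 fg.
have k2 : inf [set e : R | exists p, MC p /\ e = f p] - eps <= inf [set e : R | exists p, MC p /\ e = g p].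
  by apply: key => // p Mp; rewrite distrC; exact: fg.
move: k1 k2; set A := inf _; set B := inf _ => k1 k2.
rewrite ler_norml; apply/andP; split; lra.
Qed.


Lemma setE (h : (X * Y -> R) -> (nat -> X * Y -> X * Y -> R) -> R) :
  [set e : R | exists mu0 K, markov_coupling mX nuX mY nuY mu0 K /\ e = h mu0 K]
  = [set e : R | exists p, MC p /\ e = h p.1 p.2].
Proof.
apply/seteqP; split => e /=.
  by move=> [mu0 [K [H ->]]]; exists (mu0, K).
by move=> [[mu0 K] [H ->]]; exists mu0, K.
Qed.

Lemma bern (a : R) k : 0 <= a <= 1 -> 0 <= 1 - a ^+ k <= k%:R * (1 - a).
Proof.
move=> /andP[a0 a1]; elim: k => [|k /andP[IH1 IH2]].
  by rewrite expr0 subrr mul0r lexx.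
have b0 : 0 <= a ^+ k by apply: exprn_ge0.
have b1 : a ^+ k <= 1 by apply: exprn_ile1.
rewrite exprS -natr1; move: IH1 IH2 b0 b1; set b := a ^+ k => IH1 IH2 b0 b1.
apply/andP; split; nra.
Qed.

Lemma main_bound (d : R) k mu0 K : 0 < d -> d <= 1 ->
  markov_coupling mX nuX mY nuY mu0 K ->
  `|(\sum_(t < k) d * (1 - d) ^+ t * exp_cost C mu0 K t
      + (1 - d) ^+ k * exp_cost C mu0 K k) - exp_cost C mu0 K k|
  <= k%:R * d * M.
Proof.
move=> d0 d1 Hm.
have hS : 0 <= \sum_(t < k) d * (1 - d) ^+ t * exp_cost C mu0 K t
            <= k%:R * (d * M).
  apply/andP; split.
    apply: sumr_ge0 => t _; apply: mulr_ge0; first apply: mulr_ge0.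
    - exact: ltW.
    - by apply: exprn_ge0; rewrite subr_ge0.
    - by case/andP: (cost_bound mu0 K t Hm).
  have -> : k%:R * (d * M) = \sum_(t < k) (d * M).
    by rewrite sumr_const card_ord mulr_natl.
  apply: ler_sum => t _; case/andP: (cost_bound mu0 K t Hm) => c0 c1.
  apply: ler_pM => //.
  - apply: mulr_ge0; first exact: ltW.
    by apply: exprn_ge0; rewrite subr_ge0.
  - apply: ler_piMr; first exact: ltW.
    by apply: exprn_ile1; rewrite ?subr_ge0 // lerBlDr lerDl ltW.
have hB := @bern (1 - d) k.
have : 0 <= 1 - d <= 1 by apply/andP; split; [rewrite subr_ge0 | rewrite lerBlDr lerDl ltW].
move=> /hB /andP[b0 b1].
have e1 : 1 - (1 - d) = d by lra.
rewrite e1 in b1.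
case/andP: (cost_bound mu0 K k Hm) => c0 c1.
move: hS b0 b1 c0 c1.
set S := \sum_(t < k) _; set E := exp_cost C mu0 K k; set P := (1 - d) ^+ k.
move=> /andP[s0 s1] b0 b1 c0 c1.
have hM := M_ge0.
have q1 : (1 - P) * E <= k%:R * d * M.
  by apply: ler_pM.
have q0 : 0 <= (1 - P) * E by apply: mulr_ge0.
rewrite ler_norml; apply/andP; split; nra.
Qed.


Lemma shift_law (mu0 : X * Y -> R) K t :
  chain_law (chain_law mu0 K 1) (fun t => K t.+1) t = chain_law mu0 K t.+1.
Proof. by elim: t => [|t IH] //=; rewrite IH. Qed.

Lemma shift_coupling mu0 K :
  is_stationary mX nuX -> is_stationary mY nuY ->
  markov_coupling mX nuX mY nuY mu0 K ->
  markov_coupling mX nuX mY nuY (chain_law mu0 K 1) (fun t => K t.+1).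
Proof.
move=> sX sY Hm; have [h0 _] := law_distr mu0 K Hm 1.
case: (Hm) => [[_ [m1 m2]] hK].
split=> //; split=> //=; split.
  move=> x'; rewrite exchange_big /= sumXY sX; apply: eq_bigr => x _.
  rewrite -m1 mulr_suml; apply: eq_bigr => y _.
  by rewrite -mulr_sumr; case: (hK 0%N x y) => _ [-> _].
move=> y'; rewrite exchange_big /= sumXY sY exchange_big /=; apply: eq_bigr => y _.
rewrite -m2 mulr_suml; apply: eq_bigr => x _.
by rewrite -mulr_sumr; case: (hK 0%N x y) => _ [_ ->].
Qed.

End Helpers.

Theorem theorem15 (R : realType) (X Y : finType)
    (mX : X -> X -> R) (nuX : X -> R) (mY : Y -> Y -> R) (nuY : Y -> R)
    (C : X -> Y -> R)
    (hmX : is_kernel mX) (hnuX : is_distr nuX)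
    (hmY : is_kernel mY) (hnuY : is_distr nuY)
    (hC : forall x y, 0 <= C x y) :
  (forall k : nat,
     dWL_delta mX nuX mY nuY C delta k @[delta --> 0^'+] -->
       dWL mX nuX mY nuY C k) /\
  (is_stationary mX nuX -> is_stationary mY nuY ->
     (fun k : nat => lim (dWL_delta mX nuX mY nuY C delta k @[delta --> 0^'+]))
       @ \oo --> dWL_inf mX nuX mY nuY C).
Proof.
set M := \sum_(z : X * Y) C z.1 z.2.
have M0 : 0 <= M by apply: sumr_ge0 => z _.
have cb := @cost_bound R X Y mX nuX mY nuY hmX hnuX C hC.
have mb := @main_bound R X Y mX nuX mY nuY hmX hnuX C hC.
have part1 : forall k : nat,
     dWL_delta mX nuX mY nuY C delta k @[delta --> 0^'+] -->
       dWL mX nuX mY nuY C k.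
  move=> k.
  have hb : forall d, 0 < d -> d <= 1 ->
      `|dWL_delta mX nuX mY nuY C d k - dWL mX nuX mY nuY C k| <= k%:R * d * M.
    move=> d d0 d1; rewrite /dWL_delta /dWL !setE.
    apply: (@inf_close _ _ _ _ _ _ _ hmX hnuX hmY hnuY
      (fun p => \sum_(t < k) d * (1 - d) ^+ t * exp_cost C p.1 p.2 t +
                  (1 - d) ^+ k * exp_cost C p.1 p.2 k)
      (fun p => exp_cost C p.1 p.2 k)) => p Mp /=.
    - apply: addr_ge0.
        apply: sumr_ge0 => t _; apply: mulr_ge0; first apply: mulr_ge0.
        + exact: ltW.
        + by apply: exprn_ge0; rewrite subr_ge0.
        + by case/andP: (cb p.1 p.2 t Mp).
      apply: mulr_ge0; first by apply: exprn_ge0; rewrite subr_ge0.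
      by case/andP: (cb p.1 p.2 k Mp).
    - by case/andP: (cb p.1 p.2 k Mp).
    - exact: mb.
  apply/cvgrPdist_lt => e e0.
  have kM0 : 0 <= k%:R * M by apply: mulr_ge0.
  have q0 : 0 < k%:R * M + 1 by lra.
  have q : 0 < e / (k%:R * M + 1) by apply: divr_gt0.
  near=> d.
  have d0 : 0 < d by near: d; exact: nbhs_right_gt.
  have d1 : d <= 1 by near: d; exact: nbhs_right_ltW.
  have d2 : d < e / (k%:R * M + 1) by near: d; exact: nbhs_right_lt.
  rewrite ltr_pdivlMr // in d2.
  rewrite distrC; apply: (le_lt_trans (hb d d0 d1)).
  have : 0 <= k%:R * M by apply: mulr_ge0.
  move: d2; set kM := k%:R * M => d2 h.
  rewrite -mulrA [d * M]mulrC mulrA -/kM; nra.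
split=> // sX sY.
have -> : (fun k : nat => lim (dWL_delta mX nuX mY nuY C delta k @[delta --> 0^'+]))
    = dWL mX nuX mY nuY C.
  by apply: funext => k; apply: cvg_lim => //; exact: part1.
have pc := @prod_coupling R X Y mX nuX mY nuY hmX hnuX hmY hnuY.
have ub : forall k, dWL mX nuX mY nuY C k <= M.
  move=> k; rewrite /dWL.
  set S := [set e | _].
  have lbS : has_lbound S.
    by exists 0 => _ [mu0 [K [Hm ->]]]; case/andP: (cb mu0 K k Hm).
  have S0 : S (exp_cost C (prod0 R X Y nuX nuY) (prodK R X Y mX mY) k).
    by exists (prod0 R X Y nuX nuY), (prodK R X Y mX mY).
  apply: le_trans (ge_inf lbS S0) _.
  by case/andP: (cb _ _ k pc).
have mono : forall k, dWL mX nuX mY nuY C k <= dWL mX nuX mY nuY C k.+1.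
  move=> k; rewrite /dWL.
  apply: lb_le_inf.
    exists (exp_cost C (prod0 R X Y nuX nuY) (prodK R X Y mX mY) k.+1).
    by exists (prod0 R X Y nuX nuY), (prodK R X Y mX mY).
  move=> _ [mu0 [K [Hm ->]]].
  have lbS : has_lbound [set e : R | exists mu0 K,
         markov_coupling mX nuX mY nuY mu0 K /\ e = exp_cost C mu0 K k].
    by exists 0 => _ [mu1 [K1 [Hm1 ->]]]; case/andP: (cb mu1 K1 k Hm1).
  apply: (ge_inf lbS).
  exists (chain_law mu0 K 1), (fun t => K t.+1); split.
    exact: (@shift_coupling R X Y mX nuX mY nuY hmX hnuX mu0 K sX sY Hm).
  by rewrite /exp_cost; apply: eq_bigr => z _; rewrite shift_law.
rewrite /dWL_inf.
apply: nondecreasing_cvgn.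
  by apply/nondecreasing_seqP.
by exists M => _ [k _ <-].
Unshelve. all: by end_near.
Qed.
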